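(* The scalar equation $x'=-x-x^2-\tfrac14=-\bigl(x+\tfrac12\bigr)^2$ does not have the conditional Lipschitz shadowing property in $[-\tfrac12,\tfrac12]$ (and hence not in $[-\tfrac12,\infty)$), whereas it has the conditional Lipschitz shadowing property in $[-\rho,\rho]$ for every $\rho\in(0,\tfrac12)$.
   Context: For continuous $g\colon[0,\infty)\times\mathbb R\to\mathbb R$ and $\tau\in(0,\infty]$, a pseudosolution of $x'=g(t,x)$ on $[0,\tau)$ is a $C^1$ map $y\colon[0,\tau)\to\mathbb R$ with $\sigma_y:=\sup_{0\le t<\tau}|y'(t)-g(t,y(t))|<\infty$. The equation has the conditional Lipschitz shadowing property in $H\neq\emptyset$ if there exist $\varepsilon_0,\kappa>0$ such that whenever $0<\varepsilon\le\varepsilon_0$ and $y$ is a pseudosolution on $[0,\tau)$ ($\tau\in(0,\infty]$) with $\sigma_y\le\varepsilon$ and $y(t)\in H$ for all $t\in[0,\tau)$, there is a solution $x$ of the equation defined on $[0,\tau)$ with $\sup_{0\le t<\tau}|x(t)-y(t)|\le\kappa\varepsilon$. *)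

(* Defs.v *)
From Stdlib Require Import Reals.
From Coquelicot Require Import Rbar.
Open Scope R_scope.

(* t lies in [0, tau), tau : Rbar (tau = p_infty means [0, oo)). *)
Definition in_dom (tau : Rbar) (t : R) : Prop := 0 <= t /\ Rbar_lt (Finite t) tau.

(* y has derivative dy on [0,tau) (one-sided at the endpoint 0), written out
   as the limit of difference quotients taken within [0,tau). *)
Definition has_deriv_on (tau : Rbar) (y dy : R -> R) : Prop :=
  forall t, in_dom tau t ->
    forall eps, 0 < eps -> exists delta, 0 < delta /\
      forall s, in_dom tau s -> 0 < Rabs (s - t) < delta ->
        Rabs ((y s - y t) / (s - t) - dy t) < eps.

Definition continuous_on_dom (tau : Rbar) (f : R -> R) : Prop :=
  forall t, in_dom tau t ->
    forall eps, 0 < eps -> exists delta, 0 < delta /\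
      forall s, in_dom tau s -> Rabs (s - t) < delta -> Rabs (f s - f t) < eps.

Definition C1_on (tau : Rbar) (y dy : R -> R) : Prop :=
  has_deriv_on tau y dy /\ continuous_on_dom tau dy.

Definition is_solution (g : R -> R -> R) (tau : Rbar) (x : R -> R) : Prop :=
  has_deriv_on tau x (fun t => g t (x t)).

(* A pseudosolution y on [0,tau)
   with sigma_y <= eps is a C^1 map with derivative dy such that
   |dy t - g(t,y t)| <= eps on [0,tau) (this is sup <= eps, hence finite). *)
Definition cond_lip_shadowing (g : R -> R -> R) (H : R -> Prop) : Prop :=
  exists eps0 kappa, 0 < eps0 /\ 0 < kappa /\
    forall eps, 0 < eps <= eps0 ->
    forall (tau : Rbar), Rbar_lt (Finite 0) tau ->
    forall (y dy : R -> R),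
      C1_on tau y dy ->
      (forall t, in_dom tau t -> Rabs (dy t - g t (y t)) <= eps) ->
      (forall t, in_dom tau t -> H (y t)) ->
      exists x : R -> R, is_solution g tau x /\
        forall t, in_dom tau t -> Rabs (x t - y t) <= kappa * eps.

Definition g6 (t x : R) : R := - x - x ^ 2 - 1 / 4.

(* Main.v *)
Require Import Defs.
From Stdlib Require Import Reals Lra Psatz Classical.
From Coquelicot Require Import Coquelicot.
Open Scope R_scope.

Lemma dom_near tau t : in_dom tau t -> 0 < t ->
  exists d, 0 < d /\ forall s, Rabs (s - t) < d -> in_dom tau s.
Proof.
  intros [H0 Ht] Hp. destruct tau as [r| |]; simpl in Ht.
  - exists (Rmin t (r - t)). split. apply Rmin_case; lra.
    intros s Hs. pose proof (Rmin_l t (r-t)); pose proof (Rmin_r t (r-t)).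
    apply Rabs_def2 in Hs. split; simpl; lra.
  - exists t. split. lra. intros s Hs. apply Rabs_def2 in Hs. split; simpl; [lra|exact I].
  - destruct Ht.
Qed.

Lemma deriv_interior tau f D t : has_deriv_on tau f D -> in_dom tau t -> 0 < t ->
  derivable_pt_lim f t (D t).
Proof.
  intros Hd Hdom Hp eps He.
  destruct (dom_near tau t Hdom Hp) as [d [Hd0 Hdn]].
  destruct (Hd t Hdom eps He) as [del [Hdel H]].
  assert (Hm : 0 < Rmin del d) by (apply Rmin_case; lra).
  exists (mkposreal _ Hm). intros h Hh0 Hh. simpl in Hh.
  pose proof (Rmin_l del d); pose proof (Rmin_r del d).
  assert (E : t + h - t = h) by ring.
  specialize (H (t+h)). rewrite E in H. apply H.
  - apply Hdn. rewrite E. lra.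
  - split. apply Rabs_pos_lt; auto. lra.
Qed.

Lemma deriv_cont tau f D : has_deriv_on tau f D -> continuous_on_dom tau f.
Proof.
  intros Hd t Ht eps He.
  destruct (Hd t Ht 1 Rlt_0_1) as [del [Hdel H]].
  set (M := Rabs (D t) + 1).
  assert (HM : 0 < M) by (unfold M; pose proof (Rabs_pos (D t)); lra).
  exists (Rmin del (eps / M)). split. apply Rmin_case; [lra| apply Rdiv_lt_0_compat; lra].
  intros s Hs Hst. pose proof (Rmin_l del (eps/M)); pose proof (Rmin_r del (eps/M)).
  destruct (Req_dec s t) as [->|Hne]. rewrite Rminus_diag, Rabs_R0; lra.
  assert (Hp : 0 < Rabs (s - t)) by (apply Rabs_pos_lt; lra).
  specialize (H s Hs (conj Hp (Rlt_le_trans _ _ _ Hst (Rmin_l _ _)))).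
  assert (Eq : f s - f t = ((f s - f t)/(s-t)) * (s - t)) by (field; lra).
  rewrite Eq, Rabs_mult.
  assert (Rabs ((f s - f t)/(s-t)) <= M).
  { unfold M. replace ((f s - f t)/(s-t)) with (((f s - f t)/(s-t) - D t) + D t) by ring.
    pose proof (Rabs_triang ((f s - f t)/(s-t) - D t) (D t)). lra. }
  apply Rle_lt_trans with (M * Rabs (s - t)).
  apply Rmult_le_compat_r. apply Rabs_pos. auto.
  apply Rlt_le_trans with (M * (eps / M)). apply Rmult_lt_compat_l; lra.
  right. field. lra.
Qed.

Lemma in_dom_between tau p q c : 0 <= p -> in_dom tau q -> p <= c <= q -> in_dom tau c.
Proof.
  intros Hp [Hq0 Hq] Hc. split. lra.
  apply Rbar_le_lt_trans with (Finite q); auto. simpl. lra.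
Qed.

Lemma nonincr tau f D m p q : has_deriv_on tau f D -> 0 <= p < q -> in_dom tau q ->
  (forall c, p < c < q -> D c <= - m) -> f q <= f p - m * (q - p).
Proof.
  intros Hd Hpq Hq HD.
  assert (Hpd : in_dom tau p) by (apply (in_dom_between tau p q p); lra || auto).
  assert (Hgen : forall h, 0 < h < q - p -> f q <= f (p+h) - m * (q - (p+h))).
  { intros h Hh.
    destruct (MVT_cor2 f D (p+h) q) as [c [Hc1 Hc2]]. lra.
    intros c Hc. apply (deriv_interior tau). auto. apply (in_dom_between tau p q); lra || auto. lra.
    assert (D c <= -m) by (apply HD; lra). nra. }
  destruct (Rle_dec (f q) (f p - m * (q - p))) as [|Hn]; auto. exfalso.
  set (g := f q - (f p - m*(q-p))).
  assert (Hg : 0 < g) by (unfold g; lra).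
  destruct (deriv_cont tau f D Hd p Hpd (g/2)) as [del [Hdel Hc]]. lra.
  set (h := Rmin (Rmin del (q-p)) (g / (2 * (Rabs m + 1))) / 2).
  assert (HM : 0 < Rabs m + 1) by (pose proof (Rabs_pos m); lra).
  assert (Hh0 : 0 < Rmin (Rmin del (q-p)) (g / (2 * (Rabs m + 1)))).
  { repeat apply Rmin_case; try lra. apply Rdiv_lt_0_compat; lra. }
  pose proof (Rmin_l (Rmin del (q-p)) (g / (2 * (Rabs m + 1)))).
  pose proof (Rmin_r (Rmin del (q-p)) (g / (2 * (Rabs m + 1)))).
  pose proof (Rmin_l del (q-p)). pose proof (Rmin_r del (q-p)).
  assert (Hh : 0 < h < q - p) by (unfold h; lra).
  specialize (Hgen h Hh).
  assert (Hph : Rabs (p + h - p) < del) by (replace (p+h-p) with h by ring; rewrite Rabs_pos_eq; unfold h; lra).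
  specialize (Hc (p+h) ltac:(apply (in_dom_between tau p q); lra || auto) Hph).
  apply Rabs_def2 in Hc.
  assert (Hmh : m * h <= g / 2).
  { assert (h * (2 * (Rabs m + 1)) <= g).
    { assert (h <= g / (2 * (Rabs m + 1))) by (unfold h; lra).
      apply Rmult_le_compat_r with (r := 2 * (Rabs m + 1)) in H3; [|lra].
      replace (g / (2 * (Rabs m + 1)) * (2 * (Rabs m + 1))) with g in H3 by (field; lra). lra. }
    pose proof (Rle_abs m). nra. }
  unfold g in *. lra.
Qed.

Lemma bound_above tau f D K : has_deriv_on tau f D -> in_dom tau 0 -> f 0 <= K ->
  (forall c, in_dom tau c -> 0 < c -> K < f c -> D c <= 0) ->
  forall t, in_dom tau t -> f t <= K.
Proof.
  intros Hd H0 Hf0 HD t1 Ht1.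
  destruct (Rle_dec (f t1) K) as [|Hn]; auto. exfalso.
  assert (Ht1p : 0 < t1) by (destruct Ht1; destruct (Req_dec t1 0); [subst; lra| lra]).
  set (E := fun s => 0 <= s <= t1 /\ f s <= K).
  destruct (completeness E) as [t0 [Hub Hlub]].
  { exists t1. intros s [Hs _]. lra. }
  { exists 0. split; lra. }
  assert (Ht0a : 0 <= t0) by (apply Hub; split; lra).
  assert (Ht0b : t0 <= t1) by (apply Hlub; intros s [Hs _]; lra).
  assert (Ht0d : in_dom tau t0) by (apply (in_dom_between tau 0 t1); lra || auto).
  assert (Hft0 : f t0 <= K).
  { destruct (Rle_dec (f t0) K) as [|Hn2]; auto. exfalso.
    destruct (deriv_cont tau f D Hd t0 Ht0d (f t0 - K)) as [del [Hdel Hc]]. lra.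
    assert (Hex : exists s, E s /\ t0 - del < s).
    { apply NNPP. intro Hne.
      assert (is_upper_bound E (t0 - del)).
      { intros s Hs. destruct (Rle_dec s (t0 - del)); auto. exfalso. apply Hne. exists s. split; auto; lra. }
      specialize (Hlub _ H). lra. }
    destruct Hex as [s [[Hs1 Hs2] Hs3]].
    assert (s <= t0) by (apply Hub; split; auto).
    specialize (Hc s ltac:(apply (in_dom_between tau 0 t1); lra || auto)).
    assert (Rabs (s - t0) < del) by (rewrite Rabs_left1; lra).
    specialize (Hc H1). apply Rabs_def2 in Hc. lra. }
  assert (Hlt : t0 < t1) by (destruct (Req_dec t0 t1); [subst; lra|lra]).
  assert (Hfin := nonincr tau f D 0 t0 t1 Hd ltac:(lra) Ht1).
  assert (f t1 <= f t0 - 0 * (t1 - t0)).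
  { apply Hfin. intros c Hc. rewrite Ropp_0. apply HD.
    apply (in_dom_between tau 0 t1); lra || auto. lra.
    destruct (Rlt_dec K (f c)); auto. exfalso.
    assert (c <= t0) by (apply Hub; split; lra). lra. }
  lra.
Qed.

Lemma Rabs_le_inv x a : Rabs x <= a -> - a <= x <= a.
Proof. intros H. pose proof (Rle_abs x). pose proof (Rabs_Ropp x). pose proof (Rle_abs (-x)). lra. Qed.

Lemma g6E t z : g6 t z = - (z + 1/2)^2.
Proof. unfold g6. field. Qed.

Lemma deriv_of_lim tau f D : (forall t, in_dom tau t -> derivable_pt_lim f t (D t)) ->
  has_deriv_on tau f D.
Proof.
  intros H t Ht eps He. destruct (H t Ht eps He) as [del Hdel].
  exists del. split. apply cond_pos. intros s Hs [Hp Hl].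
  assert (s - t <> 0) by (intro E; rewrite E, Rabs_R0 in Hp; lra).
  specialize (Hdel (s - t) H0 Hl). replace (t + (s - t)) with s in Hdel by ring. auto.
Qed.

Lemma deriv_minus tau f g Df Dg : has_deriv_on tau f Df -> has_deriv_on tau g Dg ->
  has_deriv_on tau (fun t => f t - g t) (fun t => Df t - Dg t).
Proof.
  intros Hf Hg t Ht eps He.
  destruct (Hf t Ht (eps/2)) as [d1 [Hd1 H1]]. lra.
  destruct (Hg t Ht (eps/2)) as [d2 [Hd2 H2]]. lra.
  exists (Rmin d1 d2). split. apply Rmin_case; lra.
  intros s Hs [Hp Hl]. pose proof (Rmin_l d1 d2); pose proof (Rmin_r d1 d2).
  assert (Hl1 : Rabs (s - t) < d1) by lra. assert (Hl2 : Rabs (s - t) < d2) by lra.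
  specialize (H1 s Hs (conj Hp Hl1)). specialize (H2 s Hs (conj Hp Hl2)).
  assert (s - t <> 0) by (intro E; rewrite E, Rabs_R0 in Hp; lra).
  replace ((f s - g s - (f t - g t)) / (s - t) - (Df t - Dg t)) with
    (((f s - f t)/(s-t) - Df t) - ((g s - g t)/(s-t) - Dg t)) by (field; auto).
  pose proof (Rabs_triang ((f s - f t)/(s-t) - Df t) (- ((g s - g t)/(s-t) - Dg t))).
  rewrite Rabs_Ropp in H4. unfold Rminus at 1. lra.
Qed.

Lemma part1 : ~ cond_lip_shadowing g6 (fun x => - (1 / 2) <= x <= 1 / 2).
Proof.
  intros [eps0 [kappa [He0 [Hk H]]]].
  set (d := Rmin (1/2) (Rmin eps0 (1/(2*kappa)))).
  assert (Hk2 : 0 < 1/(2*kappa)) by (apply Rdiv_lt_0_compat; lra).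
  pose proof (Rmin_l (1/2) (Rmin eps0 (1/(2*kappa)))).
  pose proof (Rmin_r (1/2) (Rmin eps0 (1/(2*kappa)))).
  pose proof (Rmin_l eps0 (1/(2*kappa))). pose proof (Rmin_r eps0 (1/(2*kappa))).
  assert (Hd : 0 < d) by (unfold d; repeat apply Rmin_case; lra).
  fold d in H0, H1.
  assert (Hkd : kappa * d <= 1/2).
  { assert (kappa * d <= kappa * (1/(2*kappa))) by (apply Rmult_le_compat_l; lra).
    replace (kappa * (1/(2*kappa))) with (1/2) in H4 by (field; lra). lra. }
  destruct (H (d^2) ltac:(split; nra) p_infty I (fun _ => d - 1/2) (fun _ => 0)) as [x [Hsol Hcl]].
  - split.
    + intros t Ht e He. exists 1. split. lra. intros s _ _.
      replace ((d - 1/2 - (d - 1/2)) / (s - t) - 0) with 0 by (unfold Rdiv; ring).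
      rewrite Rabs_R0; lra.
    + intros t Ht e He. exists 1. split. lra. intros s _ _. rewrite Rminus_diag, Rabs_R0; lra.
  - intros t _. rewrite g6E. replace (0 - - (d - 1/2 + 1/2)^2) with (d^2) by ring.
    rewrite Rabs_pos_eq; nra.
  - intros t _. lra.
  - set (c := kappa * d^2).
    assert (Hc : c <= d/2) by (unfold c; nra).
    set (m := (d/2)^2).
    set (T := 4/d + 1).
    assert (HT : 0 < T) by (unfold T; assert (0 < 4/d) by (apply Rdiv_lt_0_compat; lra); lra).
    assert (HTd : in_dom p_infty T) by (split; simpl; lra || exact I).
    assert (Hdom0 : in_dom p_infty 0) by (split; simpl; lra || exact I).
    assert (Hn := nonincr p_infty x (fun t => g6 t (x t)) m 0 T Hsol ltac:(lra) HTd).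
    assert (x T <= x 0 - m * (T - 0)).
    { apply Hn. intros c0 Hc0. rewrite g6E.
      assert (Hdc : in_dom p_infty c0) by (split; simpl; lra || exact I).
      specialize (Hcl c0 Hdc). apply Rabs_le_inv in Hcl. unfold m. fold c in Hcl. nra. }
    pose proof (Hcl T HTd) as H6. pose proof (Hcl 0 Hdom0) as H7.
    apply Rabs_le_inv in H6. apply Rabs_le_inv in H7. fold c in H6, H7.
    assert (m * T = d + d^2/4) by (unfold m, T; field; lra).
    nra.
Qed.

Lemma shadow_mono g (H1 H2 : R -> Prop) : (forall z, H1 z -> H2 z) ->
  cond_lip_shadowing g H2 -> cond_lip_shadowing g H1.
Proof.
  intros Hs [e0 [k [He [Hk H]]]]. exists e0, k. split; auto. split; auto.
  intros eps Heps tau Htau y dy Hc Herr HH. apply (H eps Heps tau Htau y dy Hc Herr).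
  intros t Ht. apply Hs, HH, Ht.
Qed.

Lemma part3 rho : 0 < rho < 1/2 -> cond_lip_shadowing g6 (fun x => - rho <= x <= rho).
Proof.
  intros Hr. set (a := 1/2 - rho).
  assert (Ha : 0 < a) by (unfold a; lra).
  exists 1, (1/a). split. lra. split. apply Rdiv_lt_0_compat; lra.
  intros eps Heps tau Htau y dy [Hd _] Herr HH.
  assert (H0 : in_dom tau 0) by (split; [lra|auto]).
  set (u0 := y 0 + 1/2).
  assert (Hu0 : a <= u0) by (unfold u0, a; destruct (HH 0 H0); lra).
  set (x := fun t => u0 / (1 + u0 * t) - 1/2).
  assert (Hsol : is_solution g6 tau x).
  { apply deriv_of_lim. intros t [Ht _]. apply is_derive_Reals.
    assert (0 < 1 + u0 * t) by nra.
    unfold x. auto_derive. lra. rewrite g6E. field. lra. }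
  assert (Hxpos : forall t, in_dom tau t -> 0 < x t + 1/2).
  { intros t [Ht _]. unfold x. replace (u0 / (1 + u0 * t) - 1/2 + 1/2) with (u0 / (1 + u0 * t)) by ring.
    apply Rdiv_lt_0_compat; nra. }
  exists x. split; auto.
  intros t Ht.
  assert (Hx0 : x 0 = y 0) by (unfold x, u0; field; lra).
  assert (Hup : x t - y t <= eps / a).
  { apply (bound_above tau (fun t => x t - y t) (fun t => g6 t (x t) - dy t)); auto.
    apply deriv_minus; auto.
    rewrite Hx0. replace (y 0 - y 0) with 0 by ring. apply Rlt_le, Rdiv_lt_0_compat; lra.
    intros c Hc _ Hlt. specialize (Herr c Hc). apply Rabs_le_inv in Herr.
    pose proof (Hxpos c Hc). destruct (HH c Hc).
    rewrite g6E in *.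
    assert (a * (x c - y c) > eps).
    { apply Rmult_lt_compat_l with (r := a) in Hlt; auto.
      replace (a * (eps / a)) with eps in Hlt by (field; lra). lra. }
    assert (a <= (x c + 1/2) + (y c + 1/2)) by (unfold a in *; lra).
    nra. }
  assert (Hlo : y t - x t <= eps / a).
  { apply (bound_above tau (fun t => y t - x t) (fun t => dy t - g6 t (x t))); auto.
    apply deriv_minus; auto.
    rewrite Hx0. replace (y 0 - y 0) with 0 by ring. apply Rlt_le, Rdiv_lt_0_compat; lra.
    intros c Hc _ Hlt. specialize (Herr c Hc). apply Rabs_le_inv in Herr.
    pose proof (Hxpos c Hc). destruct (HH c Hc).
    rewrite g6E in *.
    assert (a * (y c - x c) > eps).
    { apply Rmult_lt_compat_l with (r := a) in Hlt; auto.
      replace (a * (eps / a)) with eps in Hlt by (field; lra). lra. }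
    assert (a <= (x c + 1/2) + (y c + 1/2)) by (unfold a in *; lra).
    nra. }
  replace (1 / a * eps) with (eps / a) by (field; lra).
  apply Rabs_le; lra.
Qed.

Theorem mainTheorem6 :
  ~ cond_lip_shadowing g6 (fun x => - (1 / 2) <= x <= 1 / 2) /\
  ~ cond_lip_shadowing g6 (fun x => - (1 / 2) <= x) /\
  (forall rho : R, 0 < rho < 1 / 2 ->
     cond_lip_shadowing g6 (fun x => - rho <= x <= rho)).
Proof.
  split; [exact part1|]. split; [|exact part3].
  intro H. apply part1. revert H. apply shadow_mono. intros z Hz; lra.
Qed.
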